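(* Let $\{\mathcal{S}(t)\}_{t\ge0}$ be an NGSP and let $p(n,t)=P(\mathcal{S}(t)=n)$ for $n\in\mathbb{Z}$, $t\ge0$. Then for every $t\ge0$ and every integer $n\ge1$, $$p(n,t)=\frac{1}{n}\sum_{j=1}^{k}j\left(\Lambda_{j}(t)\,p(n-j,t)-T_{j}(t)\,p(n+j,t)\right).$$
   Context: Fix $k\in\mathbb{N}$. Given locally integrable functions $\lambda_j:[0,\infty)\to[0,\infty)$, $j=1,\dots,k$, with $\Lambda_j(t)=\int_0^t\lambda_j(u)\,du<\infty$ and $\Lambda_j(s,t)=\Lambda_j(t)-\Lambda_j(s)$, a non-homogeneous generalized counting process (NGCP) with intensities $\lambda_1,\dots,\lambda_k$ is a process $\{\mathcal{M}(t)\}_{t\ge0}$ with $\mathcal{M}(0)=0$, independent increments, and $\mathbb{E}[u^{\mathcal{M}(t)-\mathcal{M}(s)}]=\exp\left(\sum_{j=1}^k\Lambda_j(s,t)(u^j-1)\right)$ for $0\le s<t$. The non-homogeneous generalized Skellam process (NGSP) is $\mathcal{S}(t)=\mathcal{M}_1(t)-\mathcal{M}_2(t)$, where $\mathcal{M}_1,\mathcal{M}_2$ are independent NGCPs with intensities $\lambda_j$ and $\gamma_j$ ($j=1,\dots,k$) respectively, with cumulative functions $\Lambda_j(t)=\int_0^t\lambda_j$ and $T_j(t)=\int_0^t\gamma_j$. *)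

(* Defs.v *)
From HB Require Import structures.
From mathcomp Require Import all_boot all_order all_algebra.
From mathcomp Require Import all_classical all_reals all_analysis.
Set Implicit Arguments. Unset Strict Implicit. Unset Printing Implicit Defensive.
Import Order.TTheory GRing.Theory Num.Theory.
Import numFieldNormedType.Exports.
Local Open Scope classical_set_scope.
Local Open Scope ring_scope.

Section NGSP.
Context {d : measure_display} {T : measurableType d} {R : realType}.

Definition Lam (lam : nat -> R -> R) (j : nat) (t : R) : R :=
  Rintegral lebesgue_measure `[0, t] (lam j).

Definition Lam2 (lam : nat -> R -> R) (j : nat) (s t : R) : R :=
  Lam lam j t - Lam lam j s.

Definition intensities (k : nat) (lam : nat -> R -> R) : Prop :=
  forall j, (1 <= j <= k)%N ->
    (forall x, 0 <= x -> 0 <= lam j x) /\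
    (forall t, 0 <= t -> lebesgue_measure.-integrable `[0, t] (EFin \o lam j)).

Definition discrete_process (M : R -> T -> nat) : Prop :=
  forall t (n : nat), measurable [set w | M t w = n].

Definition indep_increments (P : probability T R) (M : R -> T -> nat) : Prop :=
  forall (ts : seq R) (a : seq int),
    sorted <%R ts -> all (fun t => 0 <= t) ts -> size a = (size ts).-1 ->
    P (\bigcap_(i < (size ts).-1)
          [set w | ((M ts`_i.+1 w)%:Z - (M ts`_i w)%:Z)%R = a`_i])
    = (\prod_(i < (size ts).-1)
          P [set w | ((M ts`_i.+1 w)%:Z - (M ts`_i w)%:Z)%R = a`_i])%E.

Definition is_NGCP (P : probability T R) (k : nat) (lam : nat -> R -> R)
    (M : R -> T -> nat) : Prop :=
  [/\ intensities k lam,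
      discrete_process M,
      (forall w, M 0 w = 0%N),
      indep_increments P M &
      (forall s t u : R, 0 <= s -> s < t -> -1 <= u <= 1 ->
        (\int[P]_w ((u ^ ((M t w)%:Z - (M s w)%:Z))%:E))%E
        = (expR (\sum_(1 <= j < k.+1) Lam2 lam j s t * (u ^+ j - 1)))%:E)].

Definition indep_processes (P : probability T R) (M1 M2 : R -> T -> nat) : Prop :=
  forall (ts us : seq R) (a b : seq nat),
    all (fun t => 0 <= t) ts -> all (fun t => 0 <= t) us ->
    size a = size ts -> size b = size us ->
    P ((\bigcap_(i < size ts) [set w | M1 ts`_i w = a`_i]) `&`
       (\bigcap_(i < size us) [set w | M2 us`_i w = b`_i]))
    = (P (\bigcap_(i < size ts) [set w | M1 ts`_i w = a`_i]) *
       P (\bigcap_(i < size us) [set w | M2 us`_i w = b`_i]))%E.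

Definition pS (P : probability T R) (M1 M2 : R -> T -> nat) (n : int) (t : R) : R :=
  fine (P [set w | (M1 t w)%:Z - (M2 t w)%:Z = n]).

End NGSP.

(* Main.v *)
Require Import Defs.
From HB Require Import structures.
From mathcomp Require Import all_boot all_order all_algebra.
From mathcomp Require Import all_classical all_reals all_analysis.
From mathcomp Require Import ring lra.
From mathcomp Require Import measurable_realfun.
Import Order.TTheory GRing.Theory Num.Theory.
Local Open Scope ring_scope.

Set Implicit Arguments. Unset Strict Implicit. Unset Printing Implicit Defensive.

Section Analytic.
Context (R : realType).
Import numFieldNormedType.Exports.
Local Open Scope classical_set_scope.
Local Open Scope ring_scope.

Lemma four_pow_ge n : (n.+1%:R : R) <= 4%:R ^+ n.
Proof.
have h : (n.+1 <= 4 ^ n)%N.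
  apply: (leq_trans (ltn_expl n (isT : 1 < 2)%N)).
  by rewrite (_ : 4 = 2 * 2)%N // expnMn leq_pmulr // expn_gt0.
by rewrite -natrX ler_nat.
Qed.

Lemma geom_half_bound (C x : R) n : 0 <= C -> 0 <= x <= 8^-1 ->
  C * 4%:R ^+ n * x ^+ n <= C * (2^-1) ^+ n.
Proof.
move=> C0 /andP[x0 x8]; rewrite -mulrA ler_wpM2l // -exprMn.
apply: lerXn2r; rewrite ?nnegrE ?mulr_ge0 //.
by rewrite (le_trans (ler_wpM2l _ x8)) //; lra.
Qed.

Lemma cvg_pseries_bound (a : nat -> R) C x :
  (forall n, `|a n| <= C * 4%:R ^+ n) -> 0 <= x <= 8^-1 ->
  cvgn (pseries a x).
Proof.
move=> aC /[dup] x08 /andP[x0 x8].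
have C0 : 0 <= C by have := aC 0%N; rewrite expr0 mulr1; apply: le_trans.
apply: normed_cvg.
apply: (@series_le_cvg _ _ (geometric C (2^-1))) => [n|n|n|].
- by rewrite normr_ge0.
- by rewrite /geometric /= mulr_ge0 // exprn_ge0.
- rewrite /= normrM.
  rewrite /geometric /=; apply: le_trans (@geom_half_bound C x n C0 x08).
  apply: ler_pM => //.
  by rewrite ger0_norm // exprn_ge0.
- by apply: is_cvg_geometric_series; rewrite ger0_norm; lra.
Qed.

Lemma normed_pseries_bound (a : nat -> R) C x :
  (forall n, `|a n| <= C * 4%:R ^+ n) -> 0 <= x <= 8^-1 ->
  cvgn [normed pseries a x] /\ limn [normed pseries a x] <= 2 * C.
Proof.
move=> aC /[dup] x08 /andP[x0 x8].
have C0 : 0 <= C by have := aC 0%N; rewrite expr0 mulr1; apply: le_trans.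
have le : forall n, `|a n * x ^+ n| <= geometric C (2^-1) n.
  move=> n; rewrite /= normrM.
  rewrite /geometric /=; apply: le_trans (@geom_half_bound C x n C0 x08).
  apply: ler_pM => //.
  by rewrite ger0_norm // exprn_ge0.
have cg : cvgn (series (geometric C (2^-1))).
  by apply: is_cvg_geometric_series; rewrite ger0_norm; lra.
have cn : cvgn [normed pseries a x].
  apply: (@series_le_cvg _ _ (geometric C (2^-1))) => [n|n|n|//].
  - by rewrite normr_ge0.
  - by rewrite /geometric /= mulr_ge0 // exprn_ge0.
  - exact: le.
split => //.
apply: le_trans (lim_series_le cn cg le) _.
have hz : `|2^-1 : R| < 1 by rewrite ger0_norm; lra.
rewrite (cvg_lim _ (@cvg_geometric_series _ C _ hz)) //.
rewrite (_ : 1 - 2^-1 = 2^-1 :> R); last by field.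
by rewrite invrK mulrC.
Qed.

Lemma lim_pseries_bound (a : nat -> R) C x :
  (forall n, `|a n| <= C * 4%:R ^+ n) -> 0 <= x <= 8^-1 ->
  `|limn (pseries a x)| <= 2 * C.
Proof.
move=> aC x08; have [cn le] := normed_pseries_bound aC x08.
exact: le_trans (lim_series_norm cn) le.
Qed.

Lemma lim_pseries_shift (a : nat -> R) x m :
  cvgn (pseries a x) -> cvgn (pseries (fun n => a (n + m)%N) x) ->
  limn (pseries a x) = \sum_(i < m) a i * x ^+ i +
     x ^+ m * limn (pseries (fun n => a (n + m)%N) x).
Proof.
move=> ca cs.
have E : forall N, pseries a x (N + m)%N = \sum_(i < m) a i * x ^+ i +
     x ^+ m * pseries (fun n => a (n + m)%N) x N.
  move=> N; rewrite /pseries /series /= addnC (@big_cat_nat _ _ _ m) ?leq0n ?leq_addr //=.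
  rewrite big_mkord; congr (_ + _).
  rewrite (_ : \sum_(m <= i < m + N) a i * x ^+ i =
     \sum_(0 <= i < N) a (i + m)%N * x ^+ (i + m)); last first.
    by rewrite -{1}(add0n m) big_addn addKn.
  rewrite mulr_sumr; apply: eq_bigr => i _.
  by rewrite exprD; ring.
apply: cvg_lim => //.
rewrite -(cvg_shiftn m).
rewrite (_ : [sequence pseries a x (n + m)%N]_n = (fun N => \sum_(i < m) a i * x ^+ i +
     x ^+ m * pseries (fun n => a (n + m)%N) x N)); last first.
  by apply/funext => N; rewrite /= E.
apply: cvgD; first exact: cvg_cst.
apply: cvgM; first exact: cvg_cst.
exact: cs.
Qed.



Lemma pseries_uniq (c : nat -> R) C :
  (forall n, `|c n| <= C * 4%:R ^+ n) ->
  (forall x, 0 < x < 8^-1 -> limn (pseries c x) = 0) -> forall n, c n = 0.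
Proof.
move=> cC c0 n; elim/ltn_ind: n => n IH.
have C0 : 0 <= C by have := cC 0%N; rewrite expr0 mulr1; apply: le_trans.
set B := 2 * (C * 4%:R ^+ n.+1).
have B0 : 0 <= B by rewrite /B mulr_ge0 // mulr_ge0 // exprn_ge0.
have key : forall x, 0 < x < 8^-1 -> `|c n| <= x * B.
  move=> x /[dup] hx /andP[x0 x8].
  have x08 : 0 <= x <= 8^-1 by rewrite ltW // ltW.
  pose d := fun i => c (i + n)%N.
  pose e := fun i => d (i + 1)%N.
  have dC : forall i, `|d i| <= (C * 4%:R ^+ n) * 4%:R ^+ i.
    move=> i; rewrite (_ : _ * _ = C * 4%:R ^+ (i + n)); first exact: cC.
    by rewrite exprD; ring.
  have eC : forall i, `|e i| <= (C * 4%:R ^+ n.+1) * 4%:R ^+ i.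
    move=> i; rewrite (_ : _ * _ = C * 4%:R ^+ (i + 1 + n)); first exact: cC.
    by rewrite -addnA add1n exprD; ring.
  have := @lim_pseries_shift c x n (cvg_pseries_bound cC x08) (cvg_pseries_bound dC x08).
  rewrite c0 // big1 => [|i _]; last by rewrite IH // mul0r.
  rewrite add0r => /esym/eqP; rewrite mulf_eq0 expf_eq0 (gt_eqF x0) andbF /= => /eqP hd.
  have := @lim_pseries_shift d x 1 (cvg_pseries_bound dC x08) (cvg_pseries_bound eC x08).
  rewrite hd big_ord1 expr0 mulr1 expr1 => /esym/eqP; rewrite addr_eq0 => /eqP hcn.
  have -> : c n = d 0%N by rewrite /d add0n.
  rewrite hcn normrN normrM (ger0_norm (ltW x0)).
  by rewrite ler_pM2l // (lim_pseries_bound eC x08).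
apply: normr0_eq0; apply/eqP; rewrite eq_le normr_ge0 andbT; apply/ler_addgt0Pr => eps eps0.
pose x := Num.min (16%:R^-1) (eps / (B + 1)).
have x0 : 0 < x by rewrite /x lt_min invr_gt0 ltr0n /= divr_gt0 // ltr_wpDl.
have x8 : x < 8^-1 by rewrite /x gt_min; apply/orP; left; lra.
have hk : 0 < x < 8^-1 by rewrite x0 x8.
apply: le_trans (key x hk) _.
rewrite add0r.
have : x <= eps / (B + 1) by rewrite /x ge_min lexx orbT.
have B1 : 0 < B + 1 by rewrite ltr_wpDl.
rewrite ler_pdivlMr // => h.
apply: le_trans (_ : x * (B + 1) <= _) => //.
by rewrite ler_pM2l // lerDl.
Qed.


Lemma lim_pseries_sum (F : nat -> nat -> R) (r : seq nat) x :
  (forall j, cvgn (pseries (F j) x)) ->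
  cvgn (pseries (fun n => \sum_(j <- r) F j n) x) /\
  limn (pseries (fun n => \sum_(j <- r) F j n) x) =
    \sum_(j <- r) limn (pseries (F j) x).
Proof.
move=> cF; elim: r => [|j r [IHc IHl]].
  rewrite (_ : pseries _ x = fun _ => 0); last first.
    apply/funext => N; rewrite /pseries /series /= big1 // => i _.
    by rewrite big_nil mul0r.
  by rewrite big_nil; split; [exact: is_cvg_cst | exact: lim_cst].
have E : pseries (fun n => \sum_(j0 <- j :: r) F j0 n) x =
    series ((fun i => F j i * x ^+ i) + (fun i => (\sum_(j0 <- r) F j0 i) * x ^+ i)).
  rewrite /pseries; congr series; apply/funext => i /=.
  by rewrite big_cons mulrDl.
rewrite E big_cons; split.
  exact: is_cvg_seriesD (cF j) IHc.
by rewrite lim_seriesD //; [rewrite IHl | exact: (cF j)].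
Qed.

Lemma is_derive_Q (L : nat -> R) (k : nat) (x : R) :
  is_derive x 1 (fun y : R => \sum_(1 <= j < k.+1) L j * (y ^+ j - 1))
    (\sum_(1 <= j < k.+1) L j * (j%:R * x ^+ j.-1)).
Proof.
elim: k => [|k IH].
  rewrite big_geq //.
  rewrite (_ : (fun y : R => _) = cst 0); first exact: is_derive_cst.
  by apply/funext => y; rewrite big_geq.
rewrite big_nat_recr //=.
rewrite (_ : (fun y : R => _) = (fun y : R => \sum_(1 <= j < k.+1) L j * (y ^+ j - 1))
   + (fun y => L k.+1 * (y ^+ k.+1 - 1))); last first.
  by apply/funext => y; rewrite big_nat_recr.
apply: is_deriveD => //.
have h : is_derive x 1 (fun y : R => y ^+ k.+1 - 1) (k.+1%:R * x ^+ k).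
  have := is_derive_poly ('X^(k.+1) - 1 : {poly R}) x.
  rewrite derivB derivXn derivC subr0 hornerMn hornerXn /=.
  rewrite (_ : horner ('X^(k.+1) - 1 : {poly R}) = (fun y : R => y ^+ k.+1 - 1)); last first.
    by apply/funext => y; rewrite !hornerE.
  by rewrite mulr_natl.
have h2 := is_deriveZ (L k.+1) h.
rewrite (_ : (fun y : R => _) = (L k.+1) *: (fun y : R => y ^+ k.+1 - 1)); last first.
  by apply/funext => y.
exact: h2.
Qed.




Lemma lim_pseriesZ (a : nat -> R) (c x : R) : cvgn (pseries a x) ->
  limn (pseries (fun n => c * a n) x) = c * limn (pseries a x).
Proof.
move=> ca.
have -> : pseries (fun n => c * a n) x = series (c *: (fun i => a i * x ^+ i)).
  rewrite /pseries; congr series; apply/funext => i /=; rewrite !fctE; by rewrite -mulrA.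
by rewrite lim_seriesZ.
Qed.

Lemma is_cvg_pseriesZ (a : nat -> R) (c x : R) : cvgn (pseries a x) ->
  cvgn (pseries (fun n => c * a n) x).
Proof.
move=> ca.
have -> : pseries (fun n => c * a n) x = series (c *: (fun i => a i * x ^+ i)).
  rewrite /pseries; congr series; apply/funext => i /=; rewrite !fctE; by rewrite -mulrA.
exact: is_cvg_seriesZ.
Qed.

Lemma nat_le_four n : (n%:R : R) <= 4%:R ^+ n.
Proof. by apply: le_trans (four_pow_ge n); rewrite ler_nat. Qed.

Lemma two_bound n : ((n.+1 * n.+2)%:R : R) <= 2 * 4%:R ^+ n.
Proof.
have h : (n.+1 * n.+2 <= 2 * 4 ^ n)%N.
  apply: (leq_trans (leq_mul (ltn_expl n (isT : 1 < 2)%N) (ltn_expl n.+1 (isT : 1 < 2)%N))).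
  by rewrite expnS mulnCA -expnMn.
by rewrite -natrX -(natrM _ 2) ler_nat.
Qed.

Lemma pgf_rec (p L : nat -> R) (k : nat) :
  (forall n, 0 <= p n <= 1) ->
  (forall x, 0 < x < 8^-1 -> limn (pseries p x) =
     expR (\sum_(1 <= j < k.+1) L j * (x ^+ j - 1))) ->
  forall m, m%:R * p m = \sum_(1 <= j < k.+1)
     j%:R * L j * (if (j <= m)%N then p (m - j)%N else 0).
Proof.
move=> p01 hG.
have pn n : `|p n| <= 1.
  by have /andP[h0 h1] := p01 n; rewrite ger0_norm.
pose pp j n := if (j <= n)%N then p (n - j)%N else 0.
have one4 n : (1 : R) <= 1 * 4%:R ^+ n by rewrite mul1r; apply: exprn_ege1; rewrite ler1n.
have pC : forall n, `|p n| <= 1 * 4%:R ^+ n.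
  by move=> n; rewrite mul1r (le_trans (pn n)) //; apply: exprn_ege1; rewrite ler1n.
have ppC j : forall n, `|pp j n| <= 1 * 4%:R ^+ n.
  move=> n; rewrite /pp; case: ifP => _; first exact: le_trans (pn _) (one4 n).
  by rewrite normr0 mul1r exprn_ge0.
have nC : forall n, `|n%:R * p n| <= 1 * 4%:R ^+ n.
  move=> n; rewrite normrM mul1r -[X in _ <= X]mulr1.
  by apply: ler_pM => //; rewrite ger0_norm // nat_le_four.
have d1C : forall n, `|pseries_diffs p n| <= 4%:R * 4%:R ^+ n.
  move=> n; rewrite /pseries_diffs normrM -exprS -[X in _ <= X]mulr1.
  by apply: ler_pM => //; rewrite ger0_norm // nat_le_four.
have d2C : forall n, `|pseries_diffs (pseries_diffs p) n| <= 2 * 4%:R ^+ n.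
  move=> n; rewrite /pseries_diffs normrM normrM !normr_nat mulrA -natrM -[X in _ <= X]mulr1.
  by apply: ler_pM => //; rewrite ?ger0_norm // two_bound.
pose A := \sum_(1 <= j < k.+1) `|j%:R * L j|.
pose c n := n%:R * p n - \sum_(1 <= j < k.+1) j%:R * L j * pp j n.
have cC : forall n, `|c n| <= (1 + A) * 4%:R ^+ n.
  move=> n; rewrite /c (le_trans (ler_normB _ _)) // mulrDl.
  apply: lerD; first exact: nC.
  rewrite /A mulr_suml (le_trans (ler_norm_sum _ _ _)) //.
  apply: ler_sum => j _; rewrite normrM; apply: ler_pM => //.
  by rewrite -[X in _ <= X]mul1r ppC.
move=> m.
suff : c m = 0 by move/eqP; rewrite subr_eq0 => /eqP.
apply: (pseries_uniq cC) => x /[dup] hx /andP[x0 x8].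
have x08 : 0 <= x <= 8^-1 by rewrite ltW // ltW.
have cp := cvg_pseries_bound pC x08.
have K08 : 0 <= (8^-1 : R) <= 8^-1 by rewrite lexx andbT invr_ge0.
pose G := fun y => limn (pseries p y).
pose Q := fun y : R => \sum_(1 <= j < k.+1) L j * (y ^+ j - 1).
have dG : is_derive x 1 G (limn (pseries (pseries_diffs p) x)).
  apply: pseries_snd_diffs.
  - exact: cvg_pseries_bound pC K08.
  - exact: cvg_pseries_bound d1C K08.
  - exact: cvg_pseries_bound d2C K08.
  - by rewrite !ger0_norm ?ltW // invr_gt0.
have dE : is_derive x 1 (expR \o Q) (expR (Q x) * (\sum_(1 <= j < k.+1) L j * (j%:R * x ^+ j.-1))).
  exact: is_derive1_comp (is_derive_expR (Q x)) (is_derive_Q L k x).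
have nE : \forall y \near x, (expR \o Q) y = G y.
  have : x \in `]0, 8^-1[ by rewrite in_itv /= x0 x8.
  move/near_in_itvoo; apply: filterS => y; rewrite in_itv /= => /andP[y0 y8].
  by rewrite /G /= hG ?y0.
have dGp := near_eq_is_derive nE dE.
have eqD : limn (pseries (pseries_diffs p) x) =
    G x * (\sum_(1 <= j < k.+1) L j * (j%:R * x ^+ j.-1)).
  rewrite -(@derive_val _ _ _ _ _ _ _ dG) (@derive_val _ _ _ _ _ _ _ dGp) /G hG //.
have cn : cvgn (pseries (fun n => n%:R * p n) x) := cvg_pseries_bound nC x08.
have cpp j : cvgn (pseries (pp j) x) := cvg_pseries_bound (ppC j) x08.
have cF : forall j, cvgn (pseries (fun n => j%:R * L j * pp j n) x).
  by move=> j; apply: is_cvg_pseriesZ.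
have [cS lS] := @lim_pseries_sum (fun j n => j%:R * L j * pp j n) (index_iota 1 k.+1) x cF.
have npE : limn (pseries (fun n => n%:R * p n) x) =
    x * limn (pseries (pseries_diffs p) x).
  have cd : cvgn (pseries (fun n => (n + 1)%:R * p (n + 1)%N) x).
    rewrite (_ : (fun n => _) = pseries_diffs p); first exact: cvg_pseries_bound d1C x08.
    by apply/funext => n; rewrite /pseries_diffs addn1.
  rewrite (@lim_pseries_shift (fun n => n%:R * p n) x 1 cn cd) big_ord1 /= mul0r mul0r add0r expr1.
  congr (x * limn (pseries _ x)).
  by apply/funext => n; rewrite /pseries_diffs addn1.
have ppE j : limn (pseries (pp j) x) = x ^+ j * G x.
  have cs : cvgn (pseries (fun n => pp j (n + j)%N) x).
    rewrite (_ : (fun n => _) = p) //.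
    by apply/funext => n; rewrite /pp leq_addl addnK.
  rewrite (@lim_pseries_shift (pp j) x j (cpp j) cs) big1 ?add0r; last first.
    by move=> i _; rewrite /pp leqNgt ltn_ord mul0r.
  congr (_ * limn (pseries _ x)).
  by apply/funext => n; rewrite /pp leq_addl addnK.
have -> : pseries c x = series ((fun i => i%:R * p i * x ^+ i) -
    (fun i => (\sum_(1 <= j < k.+1) j%:R * L j * pp j i) * x ^+ i)).
  rewrite /pseries /c; congr series; apply/funext => i /=.
  by rewrite mulrBl.
rewrite lim_seriesB //.
rewrite -/(pseries (fun n => n%:R * p n) x) npE.
rewrite -/(pseries (fun n => \sum_(j <- index_iota 1 k.+1) j%:R * L j * pp j n) x) lS.
rewrite eqD !mulr_sumr -sumrB big_nat_cond big1 // => j /andP[/andP[j1 _] _].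
rewrite lim_pseriesZ // ppE.
rewrite -(prednK j1) exprS /=.
by apply/eqP; rewrite subr_eq0; apply/eqP; ring.
Qed.

End Analytic.

Section Prob.
Context (d : measure_display) (T : measurableType d) (R : realType).
Import numFieldNormedType.Exports.
Local Open Scope classical_set_scope.
Local Open Scope ring_scope.

Lemma probE (P : probability T R) A : measurable A -> P A = (fine (P A))%:E.
Proof.
move=> mA; rewrite fineK // ge0_fin_numE ?measure_ge0 //.
exact: (le_lt_trans (probability_le1 P mA)) (ltry _).
Qed.

Lemma series_EFin (f : nat -> R) : cvgn (series f) ->
  (\sum_(n <oo) (f n)%:E)%E = (limn (series f))%:E.
Proof.
move=> cf; rewrite -EFin_lim //.
congr (lim (_ @ \oo)); apply/funext => N /=.
by rewrite sumEFin.
Qed.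


Lemma Lam0 (lam : nat -> R -> R) j : Lam lam j 0 = 0.
Proof. by rewrite /Lam set_itv1 Rintegral_set1. Qed.

Lemma Lam_ge0 k (lam : nat -> R -> R) j t : intensities k lam -> (1 <= j <= k)%N ->
  0 <= t -> 0 <= Lam lam j t.
Proof.
move=> hi hj t0; rewrite /Lam /Rintegral fine_ge0 // integral_ge0 // => y.
rewrite /= in_itv /= => /andP[y0 _]; rewrite lee_fin.
by have [h _] := hi j hj; exact: h.
Qed.

Lemma pgf_pseries (P : probability T R) k lam (M : R -> T -> nat) t x :
  is_NGCP P k lam M -> 0 < t -> 0 <= x <= 1 ->
  cvgn (pseries (fun m => fine (P [set w | M t w = m])) x) ->
  limn (pseries (fun m => fine (P [set w | M t w = m])) x) =
    expR (\sum_(1 <= j < k.+1) Lam lam j t * (x ^+ j - 1)).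
Proof.
case=> hint hdisc h0 hind hpgf t0 /andP[x0 x1] cv.
have hx : -1 <= x <= 1 by rewrite x1 andbT; lra.
have := hpgf 0 t x (lexx 0) t0 hx.
rewrite (_ : \sum_(1 <= j < k.+1) Lam2 lam j 0 t * (x ^+ j - 1) =
   \sum_(1 <= j < k.+1) Lam lam j t * (x ^+ j - 1)); last first.
  by apply: eq_bigr => j _; rewrite /Lam2 Lam0 subr0.
move=> h; apply: EFin_inj; rewrite -h -series_EFin //.
pose A m := [set w | M t w = m].
have mA m : measurable (A m) by exact: hdisc.
transitivity (\int[P]_w (\sum_(n <oo) ((x ^+ n * \1_(A n) w)%:E)))%E.
  rewrite integral_nneseries //; last first.
  - by move=> n w _; rewrite lee_fin mulr_ge0 // ?exprn_ge0.
  - move=> n; apply/measurable_EFinP; apply: measurable_funM => //.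
  apply: eq_eseriesr => n _ /=.
  rewrite (@integralZl_indic _ _ _ P setT measurableT (fun _ => A n)) //; last first.
    by move=> /lt_geF; rewrite exprn_ge0.
  by rewrite integral_indic // setIT mulrC EFinM -probE.
apply: eq_integral => w _.
rewrite (@nneseriesD1 R (fun n => (x ^+ n * \1_(A n) w)%:E) (M t w) xpredT) //; last first.
  by move=> n _; rewrite lee_fin mulr_ge0 // ?exprn_ge0.
rewrite eseries0 ?adde0; last first.
  move=> n _ /= /negbTE nw; rewrite indicE.
  rewrite (_ : (w \in A n) = false) ?mulr0 //.
  apply/negbTE; rewrite notin_setE /A /= => e.
  by rewrite e eqxx in nw.
rewrite indicE (_ : (w \in A (M t w)) = true); last by apply/mem_set.
by rewrite mulr1 h0 subr0.
Qed.


Lemma prob01 (P : probability T R) A : measurable A ->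
  0 <= fine (P A) <= 1.
Proof.
move=> mA; rewrite fine_ge0 ?measure_ge0 //=.
by have := probability_le1 P mA; rewrite (probE P mA) lee_fin.
Qed.

Lemma ngcp_rec (P : probability T R) k lam (M : R -> T -> nat) t :
  is_NGCP P k lam M -> 0 <= t -> forall m,
  m%:R * fine (P [set w | M t w = m]) = \sum_(1 <= j < k.+1)
    j%:R * Lam lam j t * (if (j <= m)%N then fine (P [set w | M t w = (m - j)%N]) else 0).
Proof.
move=> hN; have [hint hdisc h0 hind hpgf] := hN.
rewrite le0r => /orP[/eqP -> m|t0].
  rewrite big1 => [|j _]; last by rewrite Lam0 mulr0 mul0r.
  case: m => [|m]; first by rewrite mul0r.
  rewrite (_ : [set w | M 0 w = m.+1] = set0) ?measure0 ?mulr0 //.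
  by apply/seteqP; split => w //=; rewrite h0.
apply: pgf_rec => [n|x /andP[x0 x8]].
  exact: prob01.
apply: pgf_pseries => //.
  by rewrite ltW //=; lra.
apply: (@cvg_pseries_bound _ _ 1).
  move=> n; have /andP[a b] := prob01 P (hdisc t n).
  rewrite ger0_norm // mul1r (le_trans b) //.
  by apply: exprn_ege1; rewrite ler1n.
by rewrite ltW //= ltW.
Qed.

Lemma bigcap1 (F : nat -> set T) : \bigcap_(i < 1) F i = F 0%N.
Proof.
apply/seteqP; split => w /=; first by move=> h; apply: (h 0%N).
by move=> h [|i] //= /ltnW; rewrite ltn0.
Qed.

Lemma indep1 (P : probability T R) (M1 M2 : R -> T -> nat) t a b :
  indep_processes P M1 M2 -> 0 <= t ->
  P ([set w | M1 t w = a] `&` [set w | M2 t w = b]) =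
  (P [set w | M1 t w = a] * P [set w | M2 t w = b])%E.
Proof.
move=> hind t0; have := hind [:: t] [:: t] [:: a] [:: b].
by rewrite /= t0 /= !bigcap1 /=; apply.
Qed.


Definition q1 (P : probability T R) (M : R -> T -> nat) t (y : int) : R :=
  fine (P [set w | (M t w)%:Z = y]).

Lemma setPosz (M : R -> T -> nat) t (a : nat) :
  [set w | (M t w)%:Z = a%:Z] = [set w | M t w = a].
Proof.
by apply/seteqP; split => w /=; [move=> [] | move=> ->].
Qed.

Lemma setNegz (M : R -> T -> nat) t (a : nat) :
  [set w | (M t w)%:Z = Negz a] = set0.
Proof. by apply/seteqP; split => w //=. Qed.

Lemma q1_pos (P : probability T R) M t (a : nat) :
  q1 P M t a = fine (P [set w | M t w = a]).
Proof. by rewrite /q1 setPosz. Qed.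

Lemma q1_neg (P : probability T R) M t (a : nat) : q1 P M t (Negz a) = 0.
Proof. by rewrite /q1 setNegz measure0. Qed.

Lemma q1_ge0 (P : probability T R) M t y : 0 <= q1 P M t y.
Proof. by rewrite /q1 fine_ge0 ?measure_ge0. Qed.

Lemma measB1 (M : R -> T -> nat) t y : discrete_process M ->
  measurable [set w | (M t w)%:Z = y].
Proof.
by move=> hd; case: y => a; [rewrite setPosz; exact: hd | rewrite setNegz].
Qed.

Lemma pS_series (P : probability T R) (M1 M2 : R -> T -> nat) t :
  discrete_process M1 -> discrete_process M2 -> indep_processes P M1 M2 ->
  0 <= t -> forall z,
  ((pS P M1 M2 z t)%:E = \sum_(m <oo)
     (q1 P M1 t (z + m%:Z) * fine (P [set w | M2 t w = m]))%:E)%E.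
Proof.
move=> hd1 hd2 hind t0 z.
pose F := fun m : nat => [set w | (M1 t w)%:Z = z + m%:Z] `&` [set w | M2 t w = m].
have mF m : measurable (F m) by apply: measurableI; [exact: measB1 | exact: hd2].
have SE : [set w | (M1 t w)%:Z - (M2 t w)%:Z = z] = \bigcup_(m in setT) F m.
  apply/seteqP; split => w /=.
    move=> h; exists (M2 t w) => //; rewrite /F /=; split => //.
    by rewrite -h subrK.
  by move=> [m _ [/= h1 h2]]; rewrite h1 h2 addrK.
rewrite /pS SE -probE; last by apply: bigcup_measurable => m _; exact: mF.
rewrite measure_bigcup //; last first.
  move=> i j _ _ [w [[_ hi] [_ hj]]].
  by rewrite -hi -hj.
rewrite (_ : (\sum_(i <oo | i \in [set: nat]) P (F i) = \sum_(i <oo) P (F i))%E); last by apply: eq_eseriesl => i; rewrite in_setT.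
apply: eq_eseriesr => i _.
rewrite /F /q1; case: (z + i%:Z) => a.
  by rewrite !setPosz indep1 // (probE P (hd1 t a)) (probE P (hd2 t i)) -EFinM.
by rewrite !setNegz set0I measure0 mul0r.
Qed.

End Prob.

Unset Implicit Arguments. Set Strict Implicit. Set Printing Implicit Defensive.

Theorem theorem3p4 (d : measure_display) (T : measurableType d) (R : realType)
    (P : probability T R) (k : nat) (lam gam : nat -> R -> R)
    (M1 M2 : R -> T -> nat) :
  is_NGCP P k lam M1 -> is_NGCP P k gam M2 -> indep_processes P M1 M2 ->
  forall (t : R) (n : nat), 0 <= t -> (1 <= n)%N ->
  pS P M1 M2 n%:Z t =
    n%:R^-1 * \sum_(1 <= j < k.+1)
      j%:R * (Lam lam j t * pS P M1 M2 (n%:Z - j%:Z) t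
              - Lam gam j t * pS P M1 M2 (n%:Z + j%:Z) t).
Proof.
move=> h1 h2 hind t n t0 n1.
have [hint1 hd1 _ _ _] := h1; have [hint2 hd2 _ _ _] := h2.
pose L j := `|Lam lam j t|; pose G j := `|Lam gam j t|.
have LE j : (1 <= j < k.+1)%N -> Lam lam j t = L j.
  by move=> /andP[j1 jk]; rewrite /L ger0_norm // (Lam_ge0 hint1) // j1 -ltnS.
have GE j : (1 <= j < k.+1)%N -> Lam gam j t = G j.
  by move=> /andP[j1 jk]; rewrite /G ger0_norm // (Lam_ge0 hint2) // j1 -ltnS.
pose p2 m := fine (P [set w | M2 t w = m]%classic).
pose q := q1 P M1 t.
have q_lt0 y : y < 0 -> q y = 0.
  by case: y => a //; rewrite /q q1_neg.
have p2_ge0 m : 0 <= p2 m by rewrite /p2 fine_ge0 ?measure_ge0.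
have q_ge0 y : 0 <= q y by exact: q1_ge0.
pose E z := (\sum_(m <oo) (q (z + m%:Z) * p2 m)%:E)%E.
have PS z : (pS P M1 M2 z t)%:E = E z := pS_series hd1 hd2 hind t0 z.
have R1 (a : nat) : a%:R * q a = \sum_(1 <= j < k.+1) j%:R * L j * q (a%:Z - j%:Z).
  rewrite /q q1_pos (ngcp_rec h1 t0 a); apply: eq_big_nat => j hj.
  rewrite LE //; case: leqP => ja; first by rewrite subzn // q1_pos.
  rewrite (_ : q1 P M1 t _ = 0) ?mulr0 //; apply: q_lt0; by rewrite subr_lt0 ltz_nat.
have R2 (m : nat) : m%:R * p2 m = \sum_(1 <= j < k.+1) j%:R * G j *
    (if (j <= m)%N then p2 (m - j)%N else 0).
  rewrite /p2 (ngcp_rec h2 t0 m); apply: eq_big_nat => j hj.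
  by rewrite GE.
have E_ge0 z : forall m, (0 <= (q (z + m%:Z) * p2 m)%:E)%E.
  by move=> m; rewrite lee_fin mulr_ge0.
have shiftE j : (\sum_(m <oo) (q (n%:Z + m%:Z) *
    (if (j <= m)%N then p2 (m - j)%N else 0))%:E = E (n%:Z + j%:Z)%R)%E.
  rewrite (nneseries_split 0 j); last first.
    by move=> m _; rewrite lee_fin mulr_ge0 //; case: ifP.
  rewrite add0n big1_seq ?add0e; last first.
    by move=> m /andP[_]; rewrite mem_index_iota => /andP[_ mj]; rewrite leqNgt mj mulr0.
  rewrite -nneseries_addn; last by move=> m; rewrite lee_fin mulr_ge0 //; case: ifP.
  apply: eq_eseriesr => m _; rewrite leq_addl addnK.
  by congr ((q _ * _)%:E); rewrite PoszD; ring.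
have key : (\sum_(1 <= j < k.+1) (j%:R * L j * pS P M1 M2 (n%:Z - j%:Z) t)%:E =
   (n%:R * pS P M1 M2 n t)%:E +
   \sum_(1 <= j < k.+1) (j%:R * G j * pS P M1 M2 (n%:Z + j%:Z) t)%:E)%E.
  transitivity (\sum_(m <oo) ((n + m)%N%:R * q (n + m)%N * p2 m)%:E)%E.
    rewrite (eq_bigr (fun j => \sum_(m <oo) (j%:R * L j * (q (n%:Z - j%:Z + m%:Z) * p2 m))%:E))%E; last first.
      move=> j _; rewrite EFinM PS /E -nneseriesZl //.
    rewrite -nneseries_sum; last first.
      by move=> j m _; rewrite lee_fin !mulr_ge0 // /L.
    apply: eq_eseriesr => m _; rewrite sumEFin; congr EFin.
    rewrite R1 mulr_suml; apply: eq_bigr => j _.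
    by rewrite PoszD (addrAC (n%:Z)) mulrA.
  transitivity (\sum_(m <oo) ((n%:R * (q (n%:Z + m%:Z) * p2 m))%:E +
      (q (n%:Z + m%:Z) * (m%:R * p2 m))%:E))%E.
    apply: eq_eseriesr => m _; rewrite -EFinD natrD; congr EFin.
    by rewrite -PoszD; ring.
  rewrite nneseriesD; last 2 first.
  - by move=> m _ _; rewrite lee_fin !mulr_ge0.
  - by move=> m _ _; rewrite lee_fin !mulr_ge0.
  congr (_ + _)%E.
    rewrite EFinM PS /E -nneseriesZl //.
  rewrite (eq_eseriesr (g := fun m => \sum_(1 <= j < k.+1)
     (j%:R * G j * (q (n%:Z + m%:Z) * (if (j <= m)%N then p2 (m - j)%N else 0)))%:E)%E); last first.
    move=> m _; rewrite R2 sumEFin mulr_sumr; congr EFin; apply: eq_bigr => j _.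
    by rewrite mulrCA.
  rewrite nneseries_sum; last first.
    by move=> j m _; rewrite lee_fin !mulr_ge0 // ?/G //; case: ifP.
  apply: eq_bigr => j _.
  rewrite EFinM PS -shiftE -nneseriesZl; last first.
    by move=> m _; rewrite lee_fin mulr_ge0 //; case: ifP.
  by apply: eq_eseriesr => m _; rewrite EFinM.
rewrite !sumEFin -EFinD in key; have keyR := EFin_inj key.
rewrite (eq_big_nat _ _ (F2 := fun j => j%:R * L j * pS P M1 M2 (n%:Z - j%:Z) t -
    j%:R * G j * pS P M1 M2 (n%:Z + j%:Z) t)); last first.
  by move=> j hj; rewrite LE // GE //; ring.
rewrite sumrB keyR addrK mulrA mulVf ?mul1r //.
by rewrite pnatr_eq0 -lt0n.
Qed.
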